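(* Let $V$ be a toroidal vertex algebra. If $(W,Y_W)$ is a module for $V^0$ viewed as a toroidal vertex algebra, then $(W,Y_W^0)$ is a module for $V^0$ viewed as a vertex algebra, where $Y_W^0(u,x_0)=Y_W(u;x_0,\mathbf{x})|_{\mathbf{x}=1}$ for $u\in V^0$. Conversely, if $(W,Y_W^0)$ is a module for $V^0$ viewed as a vertex algebra, then $(W,Y_W)$ is a module for $V^0$ viewed as a toroidal vertex algebra, where $$Y_W(u;x_0,\mathbf{x})=\sum_{\mathbf{m}\in\mathbb{Z}^r}Y_W^0(u_{-1,\mathbf{m}}\mathbf{1},x_0)\mathbf{x}^{-\mathbf{m}}\quad\text{for }u\in V^0.$$ Furthermore, the category of modules for $V^0$ viewed as a toroidal vertex algebra is naturally isomorphic to the category of modules for $V^0$ viewed as a vertex algebra.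
   Context: Fix a positive integer $r$. Write $\mathbf{x}=(x_1,\dots,x_r)$, $\mathbf{x}^{\mathbf{m}}=x_1^{m_1}\cdots x_r^{m_r}$ (similarly for other variables), $\mathbf{z}\mathbf{y}=(z_1y_1,\dots,z_ry_r)$. For a vector space $W$ put $\mathcal{E}(W,r)=\mathrm{Hom}(W,W[[x_1^{\pm1},\dots,x_r^{\pm1}]]((x_0)))$ and $\mathcal{E}(W)=\mathrm{Hom}(W,W((x_0)))$. A toroidal vertex algebra is a vector space $V$ with a linear map $Y(\cdot;x_0,\mathbf{x}):V\to\mathcal{E}(V,r)$, $v\mapsto\sum_{(m_0,\mathbf{m})\in\mathbb{Z}\times\mathbb{Z}^r}v_{m_0,\mathbf{m}}x_0^{-m_0-1}\mathbf{x}^{-\mathbf{m}}$, and a vector $\mathbf{1}$ with $Y(\mathbf{1};x_0,\mathbf{x})v=v$, $Y(v;x_0,\mathbf{x})\mathbf{1}\in V[[x_0,x_1^{\pm1},\dots,x_r^{\pm1}]]$ for all $v$, and the Jacobi identity $$z_0^{-1}\delta\!\left(\tfrac{x_0-y_0}{z_0}\right)Y(u;x_0,\mathbf{z}\mathbf{y})Y(v;y_0,\mathbf{y})-z_0^{-1}\delta\!\left(\tfrac{y_0-x_0}{-z_0}\right)Y(v;y_0,\mathbf{y})Y(u;x_0,\mathbf{z}\mathbf{y})=y_0^{-1}\delta\!\left(\tfrac{x_0-z_0}{y_0}\right)Y(Y(u;z_0,\mathbf{z})v;y_0,\mathbf{y})$$ for all $u,v$, where $Y(u;x_0,\mathbf{z}\mathbf{y})=\sum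 u_{m_0,\mathbf{m}}x_0^{-m_0-1}\mathbf{z}^{-\mathbf{m}}\mathbf{y}^{-\mathbf{m}}$. Modules over a toroidal vertex algebra: vector space $W$, linear $Y_W:V\to\mathcal{E}(W,r)$ with $Y_W(\mathbf{1};x_0,\mathbf{x})=1_W$ and the Jacobi identity with $Y_W$ in the three outer operator places; module homomorphisms are linear maps intertwining all $Y_W$. $V^0=\mathrm{span}\{v_{m_0,\mathbf{m}}\mathbf{1}\mid v\in V,(m_0,\mathbf{m})\in\mathbb{Z}\times\mathbb{Z}^r\}$ is a toroidal vertex subalgebra of $V$; for any module $(W,Y_W)$ of the toroidal vertex algebra $V^0$ and $u\in V^0$ one has $Y_W(u;x_0,\mathbf{x})\in\mathcal{E}(W)[x_1^{\pm1},\dots,x_r^{\pm1}]$, so the specialization $\mathbf{x}=1$ is defined; with $Y^0(v,x_0)=Y(v;x_0,\mathbf{x})|_{\mathbf{x}=1}$, $(V^0,Y^0,\mathbf{1})$ is a vertex algebra (''$V^0$ viewed as a vertex algebra''). *)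

(* Defs.v *)
From HB Require Import structures.
From mathcomp Require Import all_boot all_order all_algebra.
Set Implicit Arguments. Unset Strict Implicit. Unset Printing Implicit Defensive.
Import Order.TTheory GRing.Theory Num.Theory.
Local Open Scope ring_scope.

(* Generalized binomial coefficient  binom(l, i) = l(l-1)...(l-i+1)/i!
   for l : int, i : nat, as an integer:
   binom(n, i) = 'C(n, i) for n >= 0 and
   binom(-(n+1), i) = (-1)^i 'C(n+i, i). *)
Definition binz (l : int) (i : nat) : int :=
  match l with
  | Posz n => ('C(n, i))%:Z
  | Negz n => (-1) ^+ i * ('C(n + i, i))%:Z
  end.

Definition signz (l : int) : int := (-1) ^+ `|l|%N.

Section Defs.
Variables (K : fieldType) (r : nat).
Notation Zr := 'rV[int]_r.

(* Coefficient convention: a toroidal vertex operator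
     Y(v; x0, x) = sum_{(m0,m)} v_{m0,m} x0^{-m0-1} x^{-m}
   is encoded by  Y v m0 m : V -> V  (the operator v_{m0,m});
   a vertex operator  Y0(v, x0) = sum_n v_n x0^{-n-1}  by  Y0 v n. *)

Definition V0 (V : lmodType K) (Y : V -> int -> Zr -> V -> V) (one : V)
    (x : V) : Prop :=
  exists s : seq (K * V * int * Zr),
    x = \sum_(t <- s) t.1.1.1 *: Y t.1.1.2 t.1.2 t.2 one.

(* Module axioms for a toroidal vertex algebra (V,Y,1) restricted to the
   subspace P of V (P = V^0, or P = everything):  W with
   Y_W : P -> E(W, r).  The Jacobi identity is written coefficientwise:
   the coefficient of  x0^{-m-1} y0^{-n-1} z0^{-l-1} z^{-k} y^{-b}
   of the Jacobi identity is exactly the identity below; the infinite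
   sums over i >= 0 have finite support (by truncation), and are
   evaluated as  sum_{i<N}  for any N beyond the support. *)
Definition is_tmod (V : lmodType K) (P : V -> Prop)
    (Y : V -> int -> Zr -> V -> V) (one : V)
    (W : lmodType K) (YW : V -> int -> Zr -> W -> W) : Prop :=
  [/\
      (forall (a : K) u v, P u -> P v -> forall m0 m w,
          YW (a *: u + v) m0 m w = a *: YW u m0 m w + YW v m0 m w),
      (forall u, P u -> forall m0 m (a : K) w1 w2,
          YW u m0 m (a *: w1 + w2) = a *: YW u m0 m w1 + YW u m0 m w2),
      (forall u, P u -> forall w, exists N : int,
          forall m0 m, N <= m0 -> YW u m0 m w = 0),
      (forall m0 m w, YW one m0 m w = if (m0 == -1) && (m == 0) then w else 0)
    &
      (forall u v, P u -> P v -> forall (w : W) (l m n : int) (k b : Zr) (N : nat),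
        (forall i : nat, (N <= i)%N ->
            [/\ YW (Y u (l + i%:Z) k v) (m + n - i%:Z) b w *~ binz m i = 0,
                YW u (m + l - i%:Z) k (YW v (n + i%:Z) (b - k) w) *~ binz l i = 0
              & YW v (n + l - i%:Z) (b - k) (YW u (m + i%:Z) k w) *~ binz l i = 0])
        ->
        \sum_(i < N) YW (Y u (l + i%:Z) k v) (m + n - i%:Z) b w *~ binz m i =
        \sum_(i < N)
          ((YW u (m + l - i%:Z) k (YW v (n + i%:Z) (b - k) w)
            - YW v (n + l - i%:Z) (b - k) (YW u (m + i%:Z) k w) *~ signz l)
             *~ (signz i%:Z * binz l i)))].

Definition is_tva (V : lmodType K) (Y : V -> int -> Zr -> V -> V) (one : V)
  : Prop :=
  is_tmod (fun _ => True) Y one Y /\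
  (forall v m0 m, 0 <= m0 -> Y v m0 m one = 0).

Definition is_vmod (V : lmodType K) (P : V -> Prop)
    (Y0 : V -> int -> V -> V) (one : V)
    (W : lmodType K) (YW : V -> int -> W -> W) : Prop :=
  [/\ (forall (a : K) u v, P u -> P v -> forall n w,
          YW (a *: u + v) n w = a *: YW u n w + YW v n w),
      (forall u, P u -> forall n (a : K) w1 w2,
          YW u n (a *: w1 + w2) = a *: YW u n w1 + YW u n w2),
      (forall u, P u -> forall w, exists N : int,
          forall n, N <= n -> YW u n w = 0),
      (forall n w, YW one n w = if n == -1 then w else 0)
    & (forall u v, P u -> P v -> forall (w : W) (l m n : int) (N : nat),
        (forall i : nat, (N <= i)%N ->
            [/\ YW (Y0 u (l + i%:Z) v) (m + n - i%:Z) w *~ binz m i = 0,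
                YW u (m + l - i%:Z) (YW v (n + i%:Z) w) *~ binz l i = 0
              & YW v (n + l - i%:Z) (YW u (m + i%:Z) w) *~ binz l i = 0])
        ->
        \sum_(i < N) YW (Y0 u (l + i%:Z) v) (m + n - i%:Z) w *~ binz m i =
        \sum_(i < N)
          ((YW u (m + l - i%:Z) (YW v (n + i%:Z) w)
            - YW v (n + l - i%:Z) (YW u (m + i%:Z) w) *~ signz l)
             *~ (signz i%:Z * binz l i)))].

(* YW0 is the specialization x = 1 of YW on the subspace P, acting on the
   subset Q of W:  for u in P, Y_W(u; x0, x) restricted to Q is a Laurent
   polynomial in x (finite support s in Z^r), and
   Y_W^0(u, x0) = Y_W(u; x0, x)|_{x=1}, i.e.  u^0_n = sum_m u_{n,m}. *)
Definition specializes (V W : lmodType K) (P : V -> Prop) (Q : W -> Prop)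
    (YW : V -> int -> Zr -> W -> W) (YW0 : V -> int -> W -> W) : Prop :=
  forall u, P u -> exists s : seq Zr,
    [/\ uniq s,
        (forall m, m \notin s -> forall m0 w, Q w -> YW u m0 m w = 0)
      & (forall n w, Q w -> YW0 u n w = \sum_(m <- s) YW u n m w)].

Definition tmod_hom (V W1 W2 : lmodType K) (P : V -> Prop)
    (YW1 : V -> int -> Zr -> W1 -> W1) (YW2 : V -> int -> Zr -> W2 -> W2)
    (f : W1 -> W2) : Prop :=
  forall u, P u -> forall m0 m w, f (YW1 u m0 m w) = YW2 u m0 m (f w).

Definition vmod_hom (V W1 W2 : lmodType K) (P : V -> Prop)
    (YW1 : V -> int -> W1 -> W1) (YW2 : V -> int -> W2 -> W2)
    (f : W1 -> W2) : Prop :=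
  forall u, P u -> forall n w, f (YW1 u n w) = YW2 u n (f w).

(* Toroidal module structure obtained from a vertex-algebra module:
   Y_W(u; x0, x) = sum_m Y_W^0(u_{-1,m} 1, x0) x^{-m}. *)
Definition tmod_of_vmod (V W : lmodType K) (Y : V -> int -> Zr -> V -> V)
    (one : V) (YW0 : V -> int -> W -> W) : V -> int -> Zr -> W -> W :=
  fun u m0 m w => YW0 (Y u (-1) m one) m0 w.

End Defs.

(* Main.v *)
Require Import Defs.
From HB Require Import structures.
From mathcomp Require Import all_boot all_order all_algebra.
From mathcomp Require Import zify ring.
From Stdlib Require Import ClassicalEpsilon.
Import Order.TTheory GRing.Theory Num.Theory.
Local Open Scope ring_scope.
Set Implicit Arguments. Unset Strict Implicit.
Lemma sum_supp (T : eqType) (M : zmodType) (f : T -> M) (s t : seq T) :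
  uniq s -> uniq t -> (forall c, c \notin s -> f c = 0) ->
  (forall c, c \notin t -> f c = 0) ->
  \sum_(c <- s) f c = \sum_(c <- t) f c.
Proof.
move=> us ut fs ft.
rewrite (bigID (fun c => c \in t)) /=.
have -> : \sum_(i <- s | i \notin t) f i = 0 by apply: big1 => c /ft.
rewrite [RHS](bigID (fun c => c \in s)) /=.
have -> : \sum_(i <- t | i \notin s) f i = 0 by apply: big1 => c /fs.
rewrite !addr0.
rewrite -big_filter -[RHS]big_filter.
apply: perm_big; apply: uniq_perm; rewrite ?filter_uniq //.
by move=> c; rewrite !mem_filter andbC.
Qed.

Lemma lin0 (K : fieldType) (W1 W2 : lmodType K) (P : W1 -> Prop) (g : W1 -> W2) :
  P 0 -> (forall (a : K) x y, P x -> P y -> g (a *: x + y) = a *: g x + g y) ->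
  g 0 = 0.
Proof.
move=> P0 lin; have := lin 1 0 0 P0 P0; rewrite !scale1r addr0 => E.
by apply: (@addrI _ (g 0)); rewrite addr0 -E.
Qed.

Lemma lin_sum (K : fieldType) (W1 W2 : lmodType K) (P : W1 -> Prop)
  (g : W1 -> W2) (I : Type) (s : seq I) (F : I -> W1) :
  P 0 -> (forall x y, P x -> P y -> P (x + y)) ->
  (forall (a : K) x y, P x -> P y -> g (a *: x + y) = a *: g x + g y) ->
  (forall i, P (F i)) -> g (\sum_(i <- s) F i) = \sum_(i <- s) g (F i).
Proof.
move=> P0 PD lin PF; elim: s => [|i s IH]; first by rewrite !big_nil (@lin0 _ _ _ _ _ P0 lin).
have PS : P (\sum_(j <- s) F j) by apply: big_ind.
rewrite !big_cons; have := lin 1 _ _ (PF i) PS; rewrite !scale1r => ->.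
by rewrite IH.
Qed.


Lemma V0_0 (K : fieldType) (r : nat) (V : lmodType K)
  (Y : V -> int -> 'rV[int]_r -> V -> V) (one : V) : V0 Y one 0.
Proof. by exists [::]; rewrite big_nil. Qed.

Lemma V0_add (K : fieldType) (r : nat) (V : lmodType K)
  (Y : V -> int -> 'rV[int]_r -> V -> V) (one : V) x y :
  V0 Y one x -> V0 Y one y -> V0 Y one (x + y).
Proof. by move=> [s1 ->] [s2 ->]; exists (s1 ++ s2); rewrite big_cat. Qed.

Lemma V0_scale (K : fieldType) (r : nat) (V : lmodType K)
  (Y : V -> int -> 'rV[int]_r -> V -> V) (one : V) (a : K) x :
  V0 Y one x -> V0 Y one (a *: x).
Proof.
move=> [s ->]; exists [seq (a * t.1.1.1, t.1.1.2, t.1.2, t.2) | t <- s].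
by rewrite big_map scaler_sumr; apply: eq_bigr => t _; rewrite scalerA.
Qed.

Lemma V0_lin (K : fieldType) (r : nat) (V : lmodType K)
  (Y : V -> int -> 'rV[int]_r -> V -> V) (one : V) (a : K) x y :
  V0 Y one x -> V0 Y one y -> V0 Y one (a *: x + y).
Proof. by move=> hx hy; apply: V0_add => //; apply: V0_scale. Qed.

Lemma V0_gen (K : fieldType) (r : nat) (V : lmodType K)
  (Y : V -> int -> 'rV[int]_r -> V -> V) (one : V) v p k :
  V0 Y one (Y v p k one).
Proof. by exists [:: (1, v, p, k)]; rewrite big_seq1 scale1r. Qed.

Lemma V0_zint (K : fieldType) (r : nat) (V : lmodType K)
  (Y : V -> int -> 'rV[int]_r -> V -> V) (one : V) x (z : int) :
  V0 Y one x -> V0 Y one (x *~ z).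
Proof. by move=> hx; rewrite -scaler_int; apply: V0_scale. Qed.

Lemma V0_sub (K : fieldType) (r : nat) (V : lmodType K)
  (Y : V -> int -> 'rV[int]_r -> V -> V) (one : V) x y :
  V0 Y one x -> V0 Y one y -> V0 Y one (x - y).
Proof. by move=> hx hy; rewrite -scaleN1r addrC; apply: V0_lin. Qed.

Lemma V0_sum (K : fieldType) (r : nat) (V : lmodType K)
  (Y : V -> int -> 'rV[int]_r -> V -> V) (one : V) (I : Type) (s : seq I) F :
  (forall i, V0 Y one (F i)) -> V0 Y one (\sum_(i <- s) F i).
Proof. by move=> h; apply: big_ind => //; [apply: V0_0 | apply: V0_add]. Qed.

Lemma binz_0r m : binz m 0 = 1.
Proof. by case: m => n /=; rewrite ?bin0 ?expr0 ?mul1r. Qed.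

Lemma binz_0l i : (0 < i)%N -> binz 0 i = 0.
Proof. by case: i. Qed.

Lemma signz0 : signz 0 = 1.
Proof. by []. Qed.

Lemma tmod_w0 (K : fieldType) (r : nat) (V : lmodType K) (P : V -> Prop)
  (Y : V -> int -> 'rV[int]_r -> V -> V) (one : V) (W : lmodType K)
  (YW : V -> int -> 'rV[int]_r -> W -> W) :
  is_tmod P Y one YW -> forall u, P u -> forall m0 m, YW u m0 m 0 = 0.
Proof.
case=> _ H2 _ _ _ u Pu m0 m.
exact: (@lin0 _ _ _ (fun _ => True) (YW u m0 m) I (fun a x y _ _ => H2 u Pu m0 m a x y)).
Qed.

Lemma tmod_u0 (K : fieldType) (r : nat) (V : lmodType K) (P : V -> Prop)
  (Y : V -> int -> 'rV[int]_r -> V -> V) (one : V) (W : lmodType K)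
  (YW : V -> int -> 'rV[int]_r -> W -> W) :
  is_tmod P Y one YW -> P 0 -> forall m0 m w, YW 0 m0 m w = 0.
Proof.
case=> H1 _ _ _ _ P0 m0 m w.
exact: (@lin0 _ _ _ P (fun u => YW u m0 m w) P0 (fun a x y px py => H1 a x y px py m0 m w)).
Qed.

Lemma addz0 (x : int) : x + Posz 0%N = x. Proof. exact: addr0. Qed.
Lemma subz0 (x : int) : x - Posz 0%N = x. Proof. exact: subr0. Qed.
Lemma neqm1 (z : int) : z <> -1 -> (z == -1) = false.
Proof. by move/eqP/negbTE. Qed.

Lemma tmod_assoc1 (K : fieldType) (r : nat) (V : lmodType K) (P : V -> Prop)
  (Y : V -> int -> 'rV[int]_r -> V -> V) (one : V) (W : lmodType K)
  (YW : V -> int -> 'rV[int]_r -> W -> W) :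
  is_tmod P Y one YW -> (forall v m0 m, 0 <= m0 -> Y v m0 m one = 0) ->
  P one -> P 0 ->
  forall u, P u -> forall k q b w,
    YW (Y u (-1) k one) q b w = if b == k then YW u q k w else 0.
Proof.
move=> H vac P1 P0 u Pu k q b w.
have w0 := tmod_w0 H; have u0 := tmod_u0 H P0.
case: H => _ _ _ H4 H5.
have J := H5 u one Pu P1 w (-1) (q + 1) (-1) k b 1%N.
rewrite !big_ord1 /= in J.
rewrite !addz0 addrK H4 eqxx /= subr_eq0 H4 /= signz0 !binz_0r !mulr1z in J.
rewrite J; last first.
  move=> i hi; split.
  - by rewrite vac ?u0 ?mul0rz //; lia.
  - by rewrite H4 neqm1 /= ?w0 ?mul0rz //; lia.
  - by rewrite H4 neqm1 /= ?mul0rz //; lia.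
have h0 : forall z : int, (0 : W) *~ z = 0 by move=> z; exact: mul0rz.
by case: eqP => _; rewrite ?(w0 _ Pu) h0 subr0.
Qed.

Lemma V_assoc2 (K : fieldType) (r : nat) (V : lmodType K)
  (Y : V -> int -> 'rV[int]_r -> V -> V) (one : V) :
  is_tva Y one -> forall u v l k b,
  Y (Y u l k v) (-1) b one = Y u l k (Y v (-1) (b - k) one).
Proof.
move=> [H vac] u v l k b.
have w0 := tmod_w0 H.
case: H => _ _ _ H4 H5.
have J := H5 u v I I one l 0 (-1) k b 1%N.
rewrite !big_ord1 /= in J.
rewrite !addz0 !add0r (vac u 0 k) // (w0 _ I) bin0 signz0 binz_0r !mulr1z in J.
rewrite J; first by rewrite mul0rz subr0.
move=> i hi; split.
- by rewrite bin0n; case: i hi.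
- by rewrite vac ?(w0 _ I) ?mul0rz //; lia.
- by rewrite vac ?(w0 _ I) ?mul0rz //; lia.
Qed.

Lemma V0_from_eq (K : fieldType) (r : nat) (V : lmodType K)
  (Y : V -> int -> 'rV[int]_r -> V -> V) (one : V) a b c d :
  V0 Y one a -> V0 Y one b -> V0 Y one d -> a + b = c + d -> V0 Y one c.
Proof.
move=> ha hb hd E; have -> : c = a + b - d by rewrite E addrK.
by apply: V0_sub => //; apply: V0_add.
Qed.

Lemma V_closure_aux (K : fieldType) (r : nat) (V : lmodType K)
  (Y : V -> int -> 'rV[int]_r -> V -> V) (one : V) :
  is_tva Y one -> forall d q, (absz q <= d)%N ->
  forall u p k v j, V0 Y one (Y u p k (Y v q j one)).
Proof.
move=> [H vac]; have w0 := tmod_w0 H.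
elim=> [|d IH] q hq u p k v j.
  have -> : q = 0 by lia.
  by rewrite vac // (w0 _ I); exact: (@V0_0 _ _ _ Y one).
case: H => _ _ _ H4 H5.
have J := H5 u v I I one p 0 q k (k + j) (absz q).+1.
rewrite 2!big_ord_recl /= in J.
rewrite !addz0 !add0r (addrC k j) addrK (vac u 0 k) // (w0 _ I) mul0rz subr0 bin0 signz0 binz_0r !mulr1z in J.
have hb : forall i : nat, bump 0 i = i.+1 by move=> i; rewrite /bump leq0n add1n.
apply: (V0_from_eq _ _ _ (J _)).
- exact: V0_gen.
- by apply: V0_sum => i; apply: V0_zint; apply: V0_gen.
- apply: V0_sum => i; apply: V0_zint; apply: V0_sub.
  + case: (leP 0 (q + (bump 0 i)%:Z)) => hq0.
      rewrite (vac v) // (w0 _ I). exact: (@V0_0 _ _ _ Y one).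
    apply: IH; have := ltn_ord i; rewrite hb in hq0 *; lia.
  + apply: V0_zint; rewrite (vac u) ?(w0 _ I); [exact: (@V0_0 _ _ _ Y one) | rewrite hb; lia].
- move=> i hi; split.
  + by rewrite bin0n; case: i hi.
  + by rewrite (vac v) ?(w0 _ I) ?mul0rz //; lia.
  + by rewrite (vac u) ?(w0 _ I) ?mul0rz //; lia.
Qed.

Lemma V_closure (K : fieldType) (r : nat) (V : lmodType K)
  (Y : V -> int -> 'rV[int]_r -> V -> V) (one : V) :
  is_tva Y one -> forall u p k v, V0 Y one v -> V0 Y one (Y u p k v).
Proof.
move=> T u p k v [s ->].
have [H _] := T; case: (H) => _ H2 _ _ _.
rewrite (@lin_sum _ _ _ (fun _ => True) (Y u p k)) //.
  apply: V0_sum => t; rewrite -[_ *: _]addr0 H2 // (tmod_w0 H) // addr0.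
  by apply: V0_scale; apply: (V_closure_aux T (leqnn _)).
by move=> a x y _ _; apply: H2.
Qed.

Lemma V0_one (K : fieldType) (r : nat) (V : lmodType K)
  (Y : V -> int -> 'rV[int]_r -> V -> V) (one : V) :
  is_tva Y one -> V0 Y one one.
Proof.
case=> [[_ _ _ H4 _] _]; have := @V0_gen _ _ _ Y one one (-1) 0.
by rewrite H4 !eqxx.
Qed.

Lemma W_assoc1 (K : fieldType) (r : nat) (V : lmodType K)
  (Y : V -> int -> 'rV[int]_r -> V -> V) (one : V) (W : lmodType K)
  (YW : V -> int -> 'rV[int]_r -> W -> W) :
  is_tva Y one -> is_tmod (V0 Y one) Y one YW ->
  forall u, V0 Y one u -> forall k q b w,
    YW (Y u (-1) k one) q b w = if b == k then YW u q k w else 0.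
Proof.
move=> T H; apply: (tmod_assoc1 H (proj2 T) (V0_one T)).
exact: (@V0_0 _ _ _ Y one).
Qed.

Lemma W_supp (K : fieldType) (r : nat) (V : lmodType K)
  (Y : V -> int -> 'rV[int]_r -> V -> V) (one : V) (Y0 : V -> int -> V -> V)
  (W : lmodType K) (YW : V -> int -> 'rV[int]_r -> W -> W) :
  is_tva Y one -> specializes (V0 Y one) (V0 Y one) Y Y0 ->
  is_tmod (V0 Y one) Y one YW ->
  forall u, V0 Y one u -> exists s, uniq s /\
    forall c, c \notin s -> forall m0 w, YW u m0 c w = 0.
Proof.
move=> T hsp H u Pu; have [s [us zs _]] := hsp u Pu.
exists s; split=> // c hc m0 w.
have := W_assoc1 T H Pu c m0 c w; rewrite eqxx => <-.
rewrite (zs c hc (-1) one (V0_one T)).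
exact: (tmod_u0 H (@V0_0 _ _ _ Y one)).
Qed.

Lemma YW0_any (K : fieldType) (r : nat) (V : lmodType K)
  (P : V -> Prop) (W : lmodType K)
  (YW : V -> int -> 'rV[int]_r -> W -> W) (YW0 : V -> int -> W -> W) :
  specializes P (fun _ : W => True) YW YW0 ->
  forall u, P u -> forall n w t, uniq t ->
  (forall c, c \notin t -> YW u n c w = 0) ->
  YW0 u n w = \sum_(c <- t) YW u n c w.
Proof.
move=> sp u Pu n w t ut zt; have [s [us zs ->]] := sp u Pu => //.
by apply: sum_supp => // c hc; apply: zs.
Qed.

Lemma W_back (K : fieldType) (r : nat) (V : lmodType K)
  (Y : V -> int -> 'rV[int]_r -> V -> V) (one : V) (W : lmodType K)
  (YW : V -> int -> 'rV[int]_r -> W -> W) (YW0 : V -> int -> W -> W) :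
  is_tva Y one -> is_tmod (V0 Y one) Y one YW ->
  specializes (V0 Y one) (fun _ : W => True) YW YW0 ->
  forall u, V0 Y one u -> forall m0 m w,
  YW0 (Y u (-1) m one) m0 w = YW u m0 m w.
Proof.
move=> T H sp u Pu m0 m w.
rewrite (YW0_any sp (V0_gen _ _ _ _ _) (t := [:: m])) //.
  by rewrite big_seq1 W_assoc1 // eqxx.
by move=> c; rewrite inE W_assoc1 // => /negbTE ->.
Qed.

Lemma W_supp2 (K : fieldType) (r : nat) (V : lmodType K)
  (Y : V -> int -> 'rV[int]_r -> V -> V) (one : V) (W : lmodType K)
  (YW : V -> int -> 'rV[int]_r -> W -> W) :
  is_tva Y one -> is_tmod (V0 Y one) Y one YW ->
  forall u v, V0 Y one u -> V0 Y one v -> forall k b,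
  (forall n w, YW v n (b - k) w = 0) ->
  forall p q w, YW (Y u p k v) q b w = 0.
Proof.
move=> T H u v Pu Pv k b hv p q w.
have w0 := tmod_w0 H.
case: (H) => _ _ _ H4 H5.
have J := H5 u v Pu Pv w p 0 q k b 1%N.
rewrite !big_ord1 /= in J.
rewrite !addz0 !add0r !hv (w0 _ Pu) mul0rz subr0 mul0rz bin0 mulr1z in J.
rewrite J // => i hi; split.
- by rewrite bin0n; case: i hi.
- by rewrite hv (w0 _ Pu) mul0rz.
- by rewrite hv mul0rz.
Qed.

Lemma W_lin (K : fieldType) (r : nat) (V : lmodType K)
  (Y : V -> int -> 'rV[int]_r -> V -> V) (one : V) (Y0 : V -> int -> V -> V)
  (W : lmodType K) (YW : V -> int -> 'rV[int]_r -> W -> W) (YW0 : V -> int -> W -> W) :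
  is_tva Y one -> specializes (V0 Y one) (V0 Y one) Y Y0 ->
  is_tmod (V0 Y one) Y one YW ->
  specializes (V0 Y one) (fun _ : W => True) YW YW0 ->
  forall (a : K) u v, V0 Y one u -> V0 Y one v -> forall n w,
    YW0 (a *: u + v) n w = a *: YW0 u n w + YW0 v n w.
Proof.
move=> T hsp H sp a u v Pu Pv n w.
have [s1 [us1 zs1]] := W_supp T hsp H Pu.
have [s2 [us2 zs2]] := W_supp T hsp H Pv.
have [H1 _ _ _ _] := H.
have uU : uniq (undup (s1 ++ s2)) by apply: undup_uniq.
rewrite (YW0_any sp (V0_lin a Pu Pv) uU); last first.
  move=> c; rewrite mem_undup mem_cat negb_or => /andP[h1 h2].
  by rewrite H1 // zs1 // zs2 // scaler0 addr0.
rewrite (YW0_any sp Pu uU); last first.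
  by move=> c; rewrite mem_undup mem_cat negb_or => /andP[h1 h2]; rewrite zs1.
rewrite (YW0_any sp Pv uU); last first.
  by move=> c; rewrite mem_undup mem_cat negb_or => /andP[h1 h2]; rewrite zs2.
rewrite scaler_sumr -big_split /=; apply: eq_bigr => c _; exact: H1.
Qed.

Lemma W_vmod_easy (K : fieldType) (r : nat) (V : lmodType K)
  (Y : V -> int -> 'rV[int]_r -> V -> V) (one : V) (Y0 : V -> int -> V -> V)
  (W : lmodType K) (YW : V -> int -> 'rV[int]_r -> W -> W) (YW0 : V -> int -> W -> W) :
  is_tva Y one -> specializes (V0 Y one) (V0 Y one) Y Y0 ->
  is_tmod (V0 Y one) Y one YW ->
  specializes (V0 Y one) (fun _ : W => True) YW YW0 ->
  [/\ (forall u, V0 Y one u -> forall n (a : K) w1 w2,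
          YW0 u n (a *: w1 + w2) = a *: YW0 u n w1 + YW0 u n w2),
      (forall u, V0 Y one u -> forall w, exists N : int,
          forall n, N <= n -> YW0 u n w = 0)
    & (forall n w, YW0 one n w = if n == -1 then w else 0)].
Proof.
move=> T hsp H sp.
have [_ H2 H3 H4 _] := H.
split.
- move=> u Pu n a w1 w2.
  have [s [us zs]] := W_supp T hsp H Pu.
  rewrite !(YW0_any sp Pu us); try by move=> c /zs ->.
  rewrite scaler_sumr -big_split /=.
  by apply: eq_bigr => c _; exact: H2.
- move=> u Pu w; have [N hN] := H3 u Pu w.
  have [s [us zs]] := W_supp T hsp H Pu.
  exists N => n hn; rewrite (YW0_any sp Pu us); last by move=> c /zs ->.
  by apply: big1 => c _; apply: hN.
- move=> n w; have us : uniq [:: (0 : 'rV[int]_r)] by [].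
  rewrite (YW0_any sp (V0_one T) us) ?big_seq1 ?H4 ?eqxx ?andbT //.
  by move=> c; rewrite inE H4 => /negbTE ->; rewrite andbF.
Qed.

Lemma sum_ext (M : zmodType) (G : nat -> M) (N N' : nat) :
  (N <= N')%N -> (forall i, (N <= i)%N -> G i = 0) ->
  \sum_(i < N) G i = \sum_(i < N') G i.
Proof.
move=> hNN hG; rewrite -(big_mkord xpredT) -(big_mkord xpredT).
rewrite (@big_cat_nat _ _ _ N 0 N' _ _ (leq0n N) hNN) /=.
have -> : \sum_(N <= i < N') G i = 0.
  by apply: big1_seq => i /andP[_]; rewrite mem_index_iota => /andP[hi _]; exact: hG.
by rewrite addr0.
Qed.

Lemma combine (M : zmodType) (I J : Type) (s : seq I) (t : seq J)
  (X Z : I -> J -> M) (sg z : int) :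
  \sum_(k <- s) \sum_(c <- t) ((X k c - Z k c *~ sg) *~ z) =
  (\sum_(k <- s) \sum_(c <- t) X k c - (\sum_(c <- t) \sum_(k <- s) Z k c) *~ sg) *~ z.
Proof.
rewrite [X in _ - X *~ _]exchange_big /= (mulrz_suml sg) -sumrB mulrz_suml.
apply: eq_bigr => k _.
by rewrite (mulrz_suml sg) -sumrB mulrz_suml.
Qed.

Lemma W_borch (K : fieldType) (r : nat) (V : lmodType K)
  (Y : V -> int -> 'rV[int]_r -> V -> V) (one : V) (Y0 : V -> int -> V -> V)
  (W : lmodType K) (YW : V -> int -> 'rV[int]_r -> W -> W) (YW0 : V -> int -> W -> W) :
  is_tva Y one -> specializes (V0 Y one) (V0 Y one) Y Y0 ->
  is_tmod (V0 Y one) Y one YW ->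
  specializes (V0 Y one) (fun _ : W => True) YW YW0 ->
  forall u v, V0 Y one u -> V0 Y one v -> forall (w : W) (l m n : int) (N : nat),
        (forall i : nat, (N <= i)%N ->
            [/\ YW0 (Y0 u (l + i%:Z) v) (m + n - i%:Z) w *~ binz m i = 0,
                YW0 u (m + l - i%:Z) (YW0 v (n + i%:Z) w) *~ binz l i = 0
              & YW0 v (n + l - i%:Z) (YW0 u (m + i%:Z) w) *~ binz l i = 0])
        ->
        \sum_(i < N) YW0 (Y0 u (l + i%:Z) v) (m + n - i%:Z) w *~ binz m i =
        \sum_(i < N)
          ((YW0 u (m + l - i%:Z) (YW0 v (n + i%:Z) w)
            - YW0 v (n + l - i%:Z) (YW0 u (m + i%:Z) w) *~ signz l)
             *~ (signz i%:Z * binz l i)).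
Proof.
move=> T hsp H sp u v Pu Pv w l m n N hN.
have w0 := tmod_w0 H; have u0 := tmod_u0 H (@V0_0 _ _ _ Y one).
have [H1 H2 H3 H4 H5] := H.
have [HY _] := T; have [_ _ HY3 _ _] := HY.
have [su [usu zsu]] := W_supp T hsp H Pu.
have [sv [usv zsv]] := W_supp T hsp H Pv.
have [sV [usV zsV eY0]] := hsp u Pu.
pose KK := undup (sV ++ su); have uKK : uniq KK := undup_uniq _.
have [Nu hNu] := HY3 u I v.
have [Nv hNv] := H3 v Pv w.
have [Nw hNw] := H3 u Pu w.
pose N' := (N + absz (Nu - l) + absz (Nv - n) + absz (Nw - m))%N.
have J : forall k c,
  \sum_(i < N') YW (Y u (l + i%:Z) k v) (m + n - i%:Z) (c + k) w *~ binz m i =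
  \sum_(i < N') ((YW u (m + l - i%:Z) k (YW v (n + i%:Z) c w)
     - YW v (n + l - i%:Z) c (YW u (m + i%:Z) k w) *~ signz l)
       *~ (signz i%:Z * binz l i)).
  move=> k c; have := H5 u v Pu Pv w l m n k (c + k) N'; rewrite addrK; apply.
  move=> i hi; rewrite /N' in hi; split.
  - by rewrite hNu ?u0 ?mul0rz //; lia.
  - by rewrite hNv ?(w0 _ Pu) ?mul0rz //; lia.
  - by rewrite hNw ?(w0 _ Pv) ?mul0rz //; lia.
have E3 : forall q x, YW0 v q x = \sum_(c <- sv) YW v q c x.
  by move=> q x; apply: (YW0_any sp Pv) => // c /zsv ->.
have E4 : forall q x, YW0 u q x = \sum_(k <- KK) YW u q k x.
  move=> q x; apply: (YW0_any sp Pu) => // c.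
  by rewrite mem_undup mem_cat negb_or => /andP[_ /zsu ->].
have linU : forall q k (F : 'rV[int]_r -> W) (s : seq 'rV[int]_r),
    YW u q k (\sum_(c <- s) F c) = \sum_(c <- s) YW u q k (F c).
  move=> q k F s; apply: (@lin_sum _ _ _ (fun _ => True)) => //.
  by move=> a x y _ _; apply: H2.
have linV : forall q k (F : 'rV[int]_r -> W) (s : seq 'rV[int]_r),
    YW v q k (\sum_(c <- s) F c) = \sum_(c <- s) YW v q k (F c).
  move=> q k F s; apply: (@lin_sum _ _ _ (fun _ => True)) => //.
  by move=> a x y _ _; apply: H2.
rewrite (sum_ext (G := fun i : nat => YW0 (Y0 u (l + i%:Z) v) (m + n - i%:Z) w *~ binz m i) (N' := N'));
  last 2 first.
- by rewrite /N'; lia.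
- by move=> i hi; case: (hN i hi).
rewrite (sum_ext (G := fun i : nat => ((YW0 u (m + l - i%:Z) (YW0 v (n + i%:Z) w)
            - YW0 v (n + l - i%:Z) (YW0 u (m + i%:Z) w) *~ signz l)
             *~ (signz i%:Z * binz l i))) (N' := N'));
  last 2 first.
- by rewrite /N'; lia.
- move=> i hi; case: (hN i hi) => _ h2 h3.
  by rewrite mulrC mulrzA mulrzBl h2 -mulrzA mulrC mulrzA h3 mul0rz subrr mul0rz.
transitivity (\sum_(i < N') \sum_(k <- KK) \sum_(c <- sv)
   YW (Y u (l + i%:Z) k v) (m + n - i%:Z) (c + k) w *~ binz m i).
  apply: eq_bigr => i _.
  move: (l + i%:Z) (m + n - i%:Z) => p q.
  rewrite (eY0 _ _ Pv).
  rewrite (@lin_sum _ _ _ (V0 Y one) (fun x => YW0 x q w)); first last.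
  - by move=> k; apply: V_closure.
  - by move=> a x y px py; apply: (W_lin T hsp H sp).
  - by move=> x y; apply: V0_add.
  - exact: (@V0_0 _ _ _ Y one).
  have E1 : forall k, YW0 (Y u p k v) q w = \sum_(c <- sv) YW (Y u p k v) q (c + k) w.
    move=> k; rewrite (YW0_any sp (V_closure T u p k Pv) (t := map (fun c => c + k) sv)).
    - by rewrite big_map.
    - by rewrite map_inj_uniq // => x y /addIr.
    move=> b hb; apply: (W_supp2 T H Pu Pv) => n' w'; apply: zsv.
    apply/negP => hbk; move/negP: hb; apply; rewrite -(subrK k b).
    exact: (map_f (fun c => c + k)).
  have E2 : forall k, k \notin sV -> \sum_(c <- sv) YW (Y u p k v) q (c + k) w = 0.
    by move=> k hk; apply: big1 => c _; rewrite (zsV k hk _ _ Pv) u0.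
  rewrite (eq_bigr _ (fun k _ => E1 k)) (sum_supp usV uKK).
  - by rewrite mulrz_suml; apply: eq_bigr => k _; rewrite mulrz_suml.
  - by move=> k /E2.
  by move=> k; rewrite mem_undup mem_cat negb_or => /andP[/E2 ->].
transitivity (\sum_(i < N') \sum_(k <- KK) \sum_(c <- sv)
   ((YW u (m + l - i%:Z) k (YW v (n + i%:Z) c w)
     - YW v (n + l - i%:Z) c (YW u (m + i%:Z) k w) *~ signz l)
       *~ (signz i%:Z * binz l i))).
  rewrite exchange_big [RHS]exchange_big; apply: eq_bigr => k _.
  rewrite exchange_big [RHS]exchange_big; apply: eq_bigr => c _.
  exact: J.
apply: eq_bigr => i _; rewrite combine !E4 !E3.
congr ((_ - _ *~ _) *~ _).
- by apply: eq_bigr => k _; rewrite linU.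
- by apply: eq_bigr => c _; rewrite linV.
Qed.

Lemma V_assoc_one (K : fieldType) (r : nat) (V : lmodType K)
  (Y : V -> int -> 'rV[int]_r -> V -> V) (one : V) :
  is_tva Y one -> forall v p k m,
  Y (Y v p k one) (-1) m one = if m == k then Y v p k one else 0.
Proof.
move=> T v p k m; rewrite V_assoc2 //.
have [[_ _ _ H4 _] _] := T; have w0 := tmod_w0 (proj1 T).
rewrite H4 eqxx /= subr_eq0; by case: eqP => _; rewrite ?(w0 _ I).
Qed.

Lemma V0_decomp (K : fieldType) (r : nat) (V : lmodType K)
  (Y : V -> int -> 'rV[int]_r -> V -> V) (one : V) :
  is_tva Y one -> forall u, V0 Y one u -> exists s, [/\ uniq s,
    (forall m, m \notin s -> Y u (-1) m one = 0) &
    u = \sum_(m <- s) Y u (-1) m one].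
Proof.
move=> T u [s0 ->].
have [[H1 _ _ _ _] _] := T; have w0 := tmod_w0 (proj1 T).
have e : forall m, Y (\sum_(t <- s0) t.1.1.1 *: Y t.1.1.2 t.1.2 t.2 one) (-1) m one
   = \sum_(t <- s0) t.1.1.1 *: (if m == t.2 then Y t.1.1.2 t.1.2 t.2 one else 0).
  move=> m; rewrite (@lin_sum _ _ _ (fun _ => True) (fun x => Y x (-1) m one)) //.
    apply: eq_bigr => t _.
    have := H1 t.1.1.1 (Y t.1.1.2 t.1.2 t.2 one) 0 I I (-1) m one.
    by rewrite addr0 => ->; rewrite (tmod_u0 (proj1 T) I) addr0 V_assoc_one.
  by move=> a x y _ _; apply: H1.
pose ks := undup [seq t.2 | t <- s0].
exists ks; split.
- exact: undup_uniq.
- move=> m hm; rewrite e; apply: big1_seq => t /andP[_ ht0].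
  case: eqP => [ht|_]; last by rewrite scaler0.
  by move/negP: hm; case; rewrite mem_undup ht; apply: (map_f (fun t => t.2)).
rewrite [RHS](eq_bigr _ (fun m _ => e m)) exchange_big /=.
apply: eq_big_seq => t ht0; rewrite -scaler_sumr; congr (_ *: _).
rewrite (@sum_supp _ _ _ ks [:: t.2]) ?big_seq1 ?eqxx //.
- exact: undup_uniq.
- move=> c hc; case: eqP => // ect; move/negP: hc; case.
  by rewrite ect mem_undup; apply: (map_f (fun t => t.2)).
- by move=> c; rewrite inE => /negbTE ->.
Qed.

Lemma fin_bound (T : eqType) (s : seq T) (Q : T -> int -> Prop) :
  (forall x, exists N : int, forall n, N <= n -> Q x n) ->
  exists N : int, forall x, x \in s -> forall n, N <= n -> Q x n.
Proof.
move=> hQ; elim: s => [|x s [N IH]]; first by exists 0.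
have [N1 h1] := hQ x.
exists ((absz N1)%:Z + (absz N)%:Z) => y; rewrite inE => /orP[/eqP -> | hy] n hn.
- by apply: h1; lia.
- by apply: IH => //; lia.
Qed.

Lemma P2 (K : fieldType) (r : nat) (V : lmodType K)
  (Y : V -> int -> 'rV[int]_r -> V -> V) (one : V) (Y0 : V -> int -> V -> V)
  (W : lmodType K) (YW0 : V -> int -> W -> W) :
  is_tva Y one -> specializes (V0 Y one) (V0 Y one) Y Y0 ->
  is_vmod (V0 Y one) Y0 one YW0 ->
  is_tmod (V0 Y one) Y one (tmod_of_vmod Y one YW0) /\
  specializes (V0 Y one) (fun _ : W => True) (tmod_of_vmod Y one YW0) YW0.
Proof.
move=> T hsp Hv.
have [G1 G2 G3 G4 G5] := Hv.
have z0 : forall n w, YW0 0 n w = 0 := fun n w =>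
  @lin0 _ _ _ (V0 Y one) (fun x => YW0 x n w) (@V0_0 _ _ _ Y one)
    (fun a x y px py => G1 a x y px py n w).
have [[H1 H2 H3 H4 H5] vac] := T.
have A1 := tmod_assoc1 (proj1 T) vac I I.
split.
- split; rewrite /tmod_of_vmod.
  + move=> a u v Pu Pv m0 m w; rewrite H1 //; exact: G1 (V0_gen _ _ _ _ _) (V0_gen _ _ _ _ _) _ _.
  + by move=> u Pu m0 m a w1 w2; apply: G2; apply: V0_gen.
  + move=> u Pu w; have [s [us zs _]] := hsp u Pu.
    have [N hN] := @fin_bound _ s (fun m n => YW0 (Y u (-1) m one) n w = 0)
       (fun m => G3 _ (V0_gen _ _ _ _ _) w).
    exists N => m0 m hm0; case: (boolP (m \in s)) => hm; first exact: hN.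
    by rewrite (zs m hm _ _ (V0_one T)) z0.
  + move=> m0 m w; rewrite H4 eqxx /=.
    by case: (m == 0); rewrite ?G4 ?z0 ?andbT ?andbF.
  + move=> u v Pu Pv w l m n k b N hT.
    pose u' := Y u (-1) k one; pose v' := Y v (-1) (b - k) one.
    have E : forall p, Y (Y u p k v) (-1) b one = Y0 u' p v'.
      move=> p; rewrite V_assoc2 //.
      have [s' [us' zs' e']] := hsp u' (V0_gen _ _ _ _ _).
      rewrite e'; last exact: V0_gen.
      rewrite (@sum_supp _ _ _ s' [:: k]) ?big_seq1 ?(A1 _ I) ?eqxx //.
      * by move=> j hj; apply: zs' => //; apply: V0_gen.
      * by move=> j; rewrite inE (A1 _ I) => /negbTE ->.
    under eq_bigr => i _ do rewrite E.
    apply: G5; try exact: V0_gen.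
    move=> i hi; have [a1 a2 a3] := hT i hi.
    by rewrite /tmod_of_vmod E in a1 a2 a3; split.
- move=> u Pu; have [s [us zs eu]] := V0_decomp T Pu.
  exists s; split => //.
  + by move=> m hm m0 w _; rewrite /tmod_of_vmod zs // z0.
  + move=> n w _; rewrite {1}eu.
    rewrite (@lin_sum _ _ _ (V0 Y one) (fun x => YW0 x n w)) //.
    * exact: (@V0_0 _ _ _ Y one).
    * by move=> x y; apply: V0_add.
    * by move=> a x y px py; apply: G1.
    * by move=> m; apply: V0_gen.
Qed.

Unset Implicit Arguments.

Theorem theorem2p12 (K : fieldType) (r : nat) (V : lmodType K)
    (Y : V -> int -> 'rV[int]_r -> V -> V) (one : V)
    (Y0 : V -> int -> V -> V) :
  is_tva Y one ->
  (* (V^0, Y^0, 1) : V^0 viewed as a vertex algebra, Y^0 = Y|_{x=1} *)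
  specializes (V0 Y one) (V0 Y one) Y Y0 ->
  [/\
   (* toroidal module  ==>  vertex-algebra module (and back again) *)
   (forall (W : lmodType K) (YW : V -> int -> 'rV[int]_r -> W -> W),
      is_tmod (V0 Y one) Y one YW ->
      (exists YW0, specializes (V0 Y one) (fun _ : W => True) YW YW0) /\
      (forall YW0, specializes (V0 Y one) (fun _ : W => True) YW YW0 ->
         is_vmod (V0 Y one) Y0 one YW0 /\
         (forall u, V0 Y one u -> forall m0 m w,
            tmod_of_vmod Y one YW0 u m0 m w = YW u m0 m w))),
   (* vertex-algebra module  ==>  toroidal module (and back again) *)
   (forall (W : lmodType K) (YW0 : V -> int -> W -> W),
      is_vmod (V0 Y one) Y0 one YW0 ->
      is_tmod (V0 Y one) Y one (tmod_of_vmod Y one YW0) /\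
      specializes (V0 Y one) (fun _ : W => True) (tmod_of_vmod Y one YW0) YW0)
  & (* morphisms correspond *)
   (forall (W1 W2 : lmodType K)
      (YW1 : V -> int -> 'rV[int]_r -> W1 -> W1)
      (YW2 : V -> int -> 'rV[int]_r -> W2 -> W2)
      (YW10 : V -> int -> W1 -> W1) (YW20 : V -> int -> W2 -> W2),
      is_tmod (V0 Y one) Y one YW1 -> is_tmod (V0 Y one) Y one YW2 ->
      specializes (V0 Y one) (fun _ : W1 => True) YW1 YW10 ->
      specializes (V0 Y one) (fun _ : W2 => True) YW2 YW20 ->
      forall f : {linear W1 -> W2},
        tmod_hom (V0 Y one) YW1 YW2 f <-> vmod_hom (V0 Y one) YW10 YW20 f)].
Proof.
move=> T hsp; split.
- move=> W YW H; split.
  + pose Ps u := fun s : seq 'rV[int]_r =>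
      uniq s /\ forall c, c \notin s -> forall m0 w, YW u m0 c w = 0.
    pose sel u := epsilon (inhabits [::]) (Ps u).
    exists (fun u n w => \sum_(c <- sel u) YW u n c w) => u Pu.
    have [us zs] := epsilon_spec (inhabits [::]) (Ps u) (W_supp T hsp H Pu).
    by exists (sel u); split => // m hm m0 w _; apply: zs.
  + move=> YW0 sp; split.
    * have [e1 e2 e3] := W_vmod_easy T hsp H sp; split => //.
      - by move=> a u v Pu Pv n w; apply: (W_lin T hsp H sp).
      - exact: (W_borch T hsp H sp).
    * by move=> u Pu m0 m w; apply: (W_back T H sp).
- by move=> W YW0 Hv; apply: (P2 T hsp Hv).
- move=> W1 W2 YW1 YW2 YW10 YW20 H1 H2 sp1 sp2 f; split.
  + move=> hom u Pu n w.
    have [s1 [us1 zs1 ->]] := sp1 u Pu => //.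
    rewrite linear_sum (YW0_any sp2 Pu (t := s1)) //.
      by apply: eq_bigr => c _; apply: hom.
    by move=> c hc; rewrite -hom // zs1 // linear0.
  + move=> hom u Pu m0 m w.
    rewrite -(W_back T H1 sp1 Pu) hom; last exact: V0_gen.
    by rewrite (W_back T H2 sp2 Pu).
Qed.
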